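(* Let $\mathcal{M}\subseteq\binom{[n]}{k}$ be a positroid with Grassmann necklace $(I_1,\dots,I_n)$ and decorated permutation $\pi^{:}=(\pi,col)$, and let $j\in[n]$ with $\pi(j)\ne j$. Let $\mathcal{M}':=\{H\in\mathcal{M}: j\in H\}$ and for each $a\in[n]$ let $K_a$ be the $\le_a$-minimal element of $\mathcal{M}'$ (in Gale order). Then for every $a\in[n]$: if $j\in I_a$ then $K_a=I_a$, and if $j\notin I_a$ then $$K_a=\bigl(I_a\setminus\{\max_a(I_a\setminus I_j)\}\bigr)\cup\{j\}.$$
   Context: Indices are taken modulo $n$; we identify $[n]$ with $\mathbb{Z}_n$. For $t\in[n]$, the total order $\le_t$ on $[n]$ is $t<_t t+1<_t\cdots<_t n<_t 1<_t\cdots<_t t-1$. For $A,B\in\binom{[n]}{k}$ with $A=\{i_1<_t\cdots<_t i_k\}$ and $B=\{j_1<_t\cdots<_t j_k\}$, write $A\le_t B$ (Gale order) iff $i_s\le_t j_s$ for all $s$. For $D\subseteq[n]$, $\max_a(D)$ is the largest element of $D$ in $\le_a$. A Grassmann necklace is a sequence $(I_1,\dots,I_n)$ of subsets of $[n]$ such that for each $i$: if $i\in I_i$ then $I_{i+1}=(I_i\setminus\{i\})\cup\{j'\}$ for some $j'\in[n]$, and if $i\notin I_i$ then $I_{i+1}=I_i$. A positroid is a set $\mathcal{M}\subseteq\binom{[n]}{k}$ for which there is a Grassmann necklace $(I_1,\dots,I_n)$ with $\mathcal{M}=\{H : H\ge_t I_t \text{ for all } t\in[n]\}$; then $I_t$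 is the $\le_t$-minimum of $\mathcal{M}$ and $(I_1,\dots,I_n)$ is called the Grassmann necklace of $\mathcal{M}$. A decorated permutation is a pair $(\pi,col)$ with $\pi\in S_n$ and $col$ a function from the fixed points of $\pi$ to $\{1,-1\}$. The necklace and decorated permutation correspond bijectively via: if $I_{i+1}=(I_i\setminus\{i\})\cup\{j'\}$ with $j'\ne i$ then $\pi(i)=j'$; if $I_{i+1}=I_i$ and $i\notin I_i$ then $\pi(i)=i$, $col(i)=1$; if $I_{i+1}=I_i$ and $i\in I_i$ then $\pi(i)=i$, $col(i)=-1$. Conversely $I_r=\{i\in[n] : i<_r\pi^{-1}(i)\text{ or }(\pi(i)=i\text{ and }col(i)=-1)\}$. *)

(* Defs.v *)
(* [n] is modelled by 'I_n = {0,...,n-1} (a relabelling of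
   {1,...,n}); "i+1 mod n" is ordS. *)
From mathcomp Require Import all_boot all_order.
Set Implicit Arguments. Unset Strict Implicit. Unset Printing Implicit Defensive.

Section Defs.
Variable n : nat.
Local Notation idx := 'I_n.

(* position of i in the cyclic order <=_t  (t has rank 0, t+1 rank 1, ...) *)
Definition crank (t i : idx) : nat := (i + n - t) %% n.

Definition cle (t i j : idx) : bool := crank t i <= crank t j.

Definition csorted (t : idx) (A : {set idx}) : seq idx := sort (cle t) (enum A).

Definition gale (t : idx) (A B : {set idx}) : bool :=
  all2 (cle t) (csorted t A) (csorted t B).

(* max_a(D) : the <=_a-largest element of D (default a if D is empty) *)
Definition cmax (a : idx) (D : {set idx}) : idx :=
  if [pick x in D | [forall y in D, cle a y x]] is Some x then x else a.

Definition is_necklace (k : nat) (I : idx -> {set idx}) : Prop :=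
  forall i : idx, #|I i| = k /\
    (if i \in I i then exists j' : idx, I (ordS i) = (I i :\ i) :|: [set j']
     else I (ordS i) = I i).

Definition positroid_of (k : nat) (I : idx -> {set idx}) : {set {set idx}} :=
  [set H : {set idx} | (#|H| == k) && [forall t, gale t (I t) H]].

Definition necklace_perm (I : idx -> {set idx}) (i : idx) : idx :=
  if [pick j' | (i \in I i) && (j' != i) && (I (ordS i) == (I i :\ i) :|: [set j'])]
  is Some j' then j' else i.

End Defs.

(* Main.v *)
Require Import Defs.
From mathcomp Require Import all_boot all_order.
From Stdlib Require Import Lia.
Set Implicit Arguments. Unset Strict Implicit. Unset Printing Implicit Defensive.


Ltac tolia :=
  repeat match goal with
  | H : (_ <= _) = true |- _ => apply (elimT leP) in H
  | H : is_true (_ <= _) |- _ => apply (elimT leP) in H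
  | H : is_true (_ < _) |- _ => apply (elimT ltP) in H
  | H : (_ <= _) = false |- _ => apply negbT in H; rewrite -ltnNge in H
  | H : (_ < _) = false |- _ => apply negbT in H; rewrite -leqNgt in H
  | H : is_true (~~ (_ <= _)) |- _ => rewrite -ltnNge in H
  | H : is_true (~~ (_ < _)) |- _ => rewrite -leqNgt in H
  | |- is_true (_ <= _) => apply/leP
  | |- is_true (_ < _) => apply/ltP
  end; unfold addn, subn in *; lia.

Lemma crank_val n (t i : 'I_n) : crank t i = if t <= i then i - t else i + n - t.
Proof.
have h2 := ltn_ord t; have h3 := ltn_ord i; rewrite /crank.
case: (leqP t i) => h1.
- have ->: i + n - t = i - t + n by tolia.
  rewrite modnDr modn_small //; tolia.
- rewrite modn_small //; tolia.
Qed.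

Lemma crank_lt n (t i : 'I_n) : crank t i < n.
Proof. rewrite crank_val; have := ltn_ord t; have := ltn_ord i; repeat case: ifP => ?; move=> *; tolia. Qed.

Lemma crank_shift n (a t x : 'I_n) :
  crank a x = if crank t a <= crank t x then crank t x - crank t a
              else crank t x + n - crank t a.
Proof.
rewrite !crank_val; have := ltn_ord t; have := ltn_ord x; have := ltn_ord a.
case: (leqP t a) => ?; case: (leqP t x) => ?; case: (leqP a x) => ? /=;
  case: ifP => ?; move=> *; tolia.
Qed.

Lemma crank_inj n (t x y : 'I_n) : crank t x = crank t y -> x = y.
Proof.
rewrite !crank_val => h; apply: ord_inj; move: h; have := ltn_ord t; have := ltn_ord x; have := ltn_ord y.
case: (leqP t x) => ?; case: (leqP t y) => ? /=; move=> *; tolia.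
Qed.

Lemma crank_self n (t : 'I_n) : crank t t = 0.
Proof. by rewrite crank_val leqnn subnn. Qed.

Ltac bcase := repeat match goal with
  | |- context [nat_of_bool (?a <= ?b)] => case: (leqP a b) => ?
  end.


Lemma all2_map (T U : Type) (f : T -> U) (r : rel U) s1 s2 :
  all2 (relpre f r) s1 s2 = all2 r (map f s1) (map f s2).
Proof. by elim: s1 s2 => [|x s1 IH] [|y s2] //=; rewrite IH. Qed.

Lemma sorted_all_ge x (s : seq nat) : sorted leq (x :: s) -> forall z, z \in s -> x <= z.
Proof. move=> h; have := order_path_min leq_trans h; by move/allP. Qed.

Lemma count_lt0 (s : seq nat) p : (forall z, z \in s -> p <= z) -> count (fun v => v < p) s = 0.
Proof.
move=> h; rewrite (eq_in_count (a2 := pred0)) ?count_pred0 // => z /h hz /=.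
by rewrite ltnNge hz.
Qed.

Lemma all2_count (s1 s2 : seq nat) : sorted leq s1 -> sorted leq s2 -> size s1 = size s2 ->
  all2 leq s1 s2 <-> forall p, count (fun v => v < p) s2 <= count (fun v => v < p) s1.
Proof.
elim: s1 s2 => [|x s1 IH] [|y s2] //= hs1 hs2 hsz0; try by [].
case: hsz0 => hsz.
have hs1' := path_sorted hs1; have hs2' := path_sorted hs2.
have g1 := sorted_all_ge hs1; have g2 := sorted_all_ge hs2.
split.
- case/andP => hxy /(IH _ hs1' hs2' hsz) H p.
  apply: leq_add; last exact: H.
  case: (ltnP y p) => h //=; by rewrite (leq_ltn_trans hxy h).
- move=> H.
  have hxy : x <= y.
    case: (leqP x y) => // hyx.
    have := H y.+1; rewrite ltnSn (count_lt0 (s := s1)); last first.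
      by move=> z /g1 hz; apply: leq_trans hz.
    by rewrite ltnS (leqNgt x) hyx.
  rewrite hxy /=; apply/(IH _ hs1' hs2' hsz) => p.
  case: (ltnP y p) => hyp.
  + have := H p; rewrite hyp (leq_ltn_trans hxy hyp) !add1n ltnS; done.
  + by rewrite (count_lt0 (s := s2)) // => z /g2 hz; apply: leq_trans hz.
Qed.

Definition cnt n (A : {set 'I_n}) (P : pred 'I_n) : nat := \sum_(x : 'I_n) ((x \in A) && P x).

Lemma count_enum_cnt n (A : {set 'I_n}) (P : pred 'I_n) : count P (enum A) = cnt A P.
Proof.
rewrite -sum1_count big_mkcond /= big_enum big_mkcond /cnt.
by apply: eq_bigr => x _; case: (x \in A); case: (P x).
Qed.

Lemma card_cnt n (A : {set 'I_n}) : #|A| = \sum_(x : 'I_n) (x \in A : nat).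
Proof. by rewrite -sum1_card big_mkcond /=; apply: eq_bigr => x _; case: (x \in A). Qed.

Lemma cnt_compl n (A : {set 'I_n}) (P : pred 'I_n) : cnt A P + cnt A (predC P) = #|A|.
Proof.
rewrite card_cnt /cnt -big_split /=; apply: eq_bigr => x _.
by case: (x \in A); case: (P x).
Qed.

Lemma gale_cnt n (t : 'I_n) (A B : {set 'I_n}) :
  gale t A B <-> (#|A| = #|B| /\ forall p, cnt B (fun x => crank t x < p) <= cnt A (fun x => crank t x < p)).
Proof.
rewrite /gale /csorted.
have E : cle t = relpre (crank t) leq by [].
rewrite E all2_map -!sort_map.
have sA := sort_sorted leq_total (map (crank t) (enum A)).
have sB := sort_sorted leq_total (map (crank t) (enum B)).
have cE : forall (C : {set 'I_n}) p, count (fun v => v < p) (sort leq (map (crank t) (enum C))) =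
                      cnt C (fun x => crank t x < p).
  by move=> C p; rewrite count_sort count_map count_enum_cnt.
split.
- move=> h.
  have hsz : size (sort leq (map (crank t) (enum A))) = size (sort leq (map (crank t) (enum B))).
    by move: h; rewrite all2E => /andP [/eqP ->].
  split; first by move: hsz; rewrite !size_sort !size_map -!cardE.
  by move=> p; rewrite -!cE; apply: ((all2_count sA sB hsz).1 h).
- case=> hc H; apply/(all2_count sA sB).
  + by rewrite !size_sort !size_map -!cardE hc.
  + by move=> p; rewrite !cE.
Qed.


Lemma iter_ordS_val n (r : 'I_n) d : val (iter d (@ordS n) r) = (r + d) %% n.
Proof.
elim: d => [|d IH] /=; first by rewrite addn0 modn_small.
by rewrite IH -addn1 modnDml addn1 addnS.
Qed.

Lemma crank_iter n (r : 'I_n) d : d < n -> crank r (iter d (@ordS n) r) = d.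
Proof.
move=> hd; have hr := ltn_ord r; rewrite crank_val iter_ordS_val.
case: (ltnP (r + d) n) => h.
- rewrite modn_small // leq_addr; tolia.
- have ->: r + d = (r + d - n) + n by tolia.
  rewrite modnDr modn_small; last by tolia.
  case: ifP => ?; tolia.
Qed.

Lemma neck_card n k (I : 'I_n -> {set 'I_n}) i : is_necklace k I -> #|I i| = k.
Proof. by move=> h; case: (h i). Qed.

Lemma neck_step n k (I : 'I_n -> {set 'I_n}) s x :
  is_necklace k I -> x \in I s -> x != s -> x \in I (ordS s).
Proof.
move=> h hx hxs; case: (h s) => _.
case: ifP => _; last by move=> ->.
by case=> j' ->; rewrite in_setU in_setD1 hxs hx.
Qed.

Lemma persist_iter n k (I : 'I_n -> {set 'I_n}) r x d :
  is_necklace k I -> x \in I r -> d <= crank r x -> x \in I (iter d (@ordS n) r).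
Proof.
move=> hn hx; elim: d => [|d IH] hd //=.
have hdn : d < n by apply: (leq_ltn_trans _ (crank_lt r x)); apply: ltnW.
apply: (neck_step hn); first by apply: IH; apply: ltnW.
apply/eqP => e; move: hd; rewrite e crank_iter //; by rewrite ltnn.
Qed.

Lemma persist n k (I : 'I_n -> {set 'I_n}) r r' x :
  is_necklace k I -> x \in I r -> crank r r' <= crank r x -> x \in I r'.
Proof.
move=> hn hx hd.
have -> : r' = iter (crank r r') (@ordS n) r.
  by apply: (@crank_inj n r); rewrite crank_iter // crank_lt.
exact: persist_iter hn hx hd.
Qed.

Lemma jIj n (I : 'I_n -> {set 'I_n}) j : necklace_perm I j != j -> j \in I j.
Proof.
rewrite /necklace_perm; case: pickP => [j' /andP [/andP [h _] _] | _] //.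
by rewrite eqxx.
Qed.

Lemma cnt_le n (A B : {set 'I_n}) (P Q : pred 'I_n) :
  (forall x, x \in A -> P x -> (x \in B) && Q x) -> cnt A P <= cnt B Q.
Proof.
move=> h; apply: leq_sum => x _.
case hA: (x \in A); case hP: (P x) => //=.
by rewrite (h x hA hP).
Qed.

Lemma cnt_ext n (A : {set 'I_n}) (P Q : pred 'I_n) :
  (forall x, P x = Q x) -> cnt A P = cnt A Q.
Proof. by move=> h; apply: eq_bigr => x _; rewrite h. Qed.

Lemma sum_eq1 n (m : 'I_n) : \sum_(x : 'I_n) (x == m : nat) = 1.
Proof.
rewrite (bigD1 m) //= eqxx big1 // => x /negbTE -> //.
Qed.

Lemma cnt_compl' n (A : {set 'I_n}) (f : 'I_n -> nat) p :
  cnt A (fun x => f x < p) + cnt A (fun x => p <= f x) = #|A|.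
Proof.
rewrite -(cnt_compl A (fun x => f x < p)); congr (_ + _); apply: cnt_ext => x /=.
by rewrite leqNgt.
Qed.

Lemma gale_F n (t : 'I_n) (A B : {set 'I_n}) p :
  gale t A B -> cnt A (fun x => p <= crank t x) <= cnt B (fun x => p <= crank t x).
Proof.
case/gale_cnt => hc /(_ p) h.
have h1 := cnt_compl' A (crank t) p; have h2 := cnt_compl' B (crank t) p.
tolia.
Qed.

Lemma gale_neck n k (I : 'I_n -> {set 'I_n}) t a :
  is_necklace k I -> gale t (I t) (I a).
Proof.
move=> hn; apply/gale_cnt; split; first by rewrite !(neck_card _ hn).
move=> p.
case: (leqP (crank t a) p) => hap.
- have h : cnt (I t) (fun x => p <= crank t x) <= cnt (I a) (fun x => p <= crank t x).
    apply: cnt_le => x hx hp; rewrite hp andbT.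
    by apply: (persist hn hx); apply: leq_trans hp.
  have h1 := cnt_compl' (I t) (crank t) p; have h2 := cnt_compl' (I a) (crank t) p.
  rewrite !(neck_card _ hn) in h1 h2; tolia.
- apply: cnt_le => x hx hp; rewrite hp andbT.
  apply: (persist hn hx).
  rewrite (crank_shift a t t) (crank_shift a t x) crank_self.
  have := crank_lt t a; have := crank_lt t x.
  case: ifP => ?; case: ifP => ?; move=> *; tolia.
Qed.


Lemma cmax_spec n (a : 'I_n) (D : {set 'I_n}) x0 : x0 \in D ->
  cmax a D \in D /\ forall y, y \in D -> crank a y <= crank a (cmax a D).
Proof.
move=> hx0; rewrite /cmax; case: pickP => [x /andP [hx /forall_inP h] | hnone].
- by split => // y hy; apply: h.
- case: (@arg_maxnP _ x0 (fun x => x \in D) (crank a) hx0) => xm hxm hmax.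
  exfalso; move: (hnone xm); rewrite hxm /=; move/negbT/negP; apply.
  by apply/forall_inP => y hy; apply: hmax.
Qed.

Lemma sum_eq1P n (m : 'I_n) (P : pred 'I_n) : \sum_(x : 'I_n) ((x == m) && P x : nat) = P m.
Proof.
rewrite (bigD1 m) //= eqxx big1 ?addn0 // => x /negbTE -> //.
Qed.

Lemma cnt_T n (A : {set 'I_n}) : cnt A (fun _ => true) = #|A|.
Proof. by rewrite card_cnt; apply: eq_bigr => x _; rewrite andbT. Qed.

Section Main.
Variables (n k : nat) (I : 'I_n -> {set 'I_n}) (j a m : 'I_n).
Hypotheses (hn : is_necklace k I) (hjj : j \in I j) (hja : j \notin I a)
  (hm : m \in I a) (hmj : m \notin I j)
  (hmax : forall y, y \in I a -> y \notin I j -> crank a y <= crank a m).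

Let K := (I a :\ m) :|: [set j].

Lemma hmj_neq : m != j.
Proof. by apply/eqP => e; move: hm; rewrite e (negbTE hja). Qed.

Lemma Kcnt (P : pred 'I_n) : cnt K P + P m = cnt (I a) P + P j.
Proof.
rewrite -(sum_eq1P m P) -(sum_eq1P j P) /cnt -!big_split /=.
apply: eq_bigr => x _; rewrite /K in_setU in_setD1 in_set1.
case: (x =P m) => [-> | _].
- by rewrite (negbTE hmj_neq) hm /=; case: (P m).
- rewrite /=; case: (x =P j) => [-> | _] /=.
  + by rewrite (negbTE hja) /= addn0.
  + by case: (x \in I a); case: (P x).
Qed.

Lemma Kcard : #|K| = k.
Proof.
have := Kcnt (fun _ => true); rewrite !cnt_T (neck_card _ hn) /=.
by move/eqP; rewrite eqn_add2r => /eqP.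
Qed.

Lemma crank_a_mj : crank a m < crank a j.
Proof.
case: (leqP (crank a j) (crank a m)) => // h.
by move: hmj; rewrite (persist hn hm h).
Qed.

Lemma strict t p : crank t j < p -> p <= crank t m ->
  cnt (I a) (fun x => crank t x < p) + 1 <= cnt (I t) (fun x => crank t x < p).
Proof.
move=> hjp hpm.
have ham := crank_a_mj.
case: (leqP (crank t a) p) => hap.
- have hmt : m \notin I t.
    apply/negP => hmt; move: hmj; rewrite (persist hn hmt) //.
    by apply: ltnW; apply: leq_trans hjp hpm.
  have h : cnt (I t) (fun x => p <= crank t x) + 1 <= cnt (I a) (fun x => p <= crank t x).
    rewrite -(sum_eq1 m) /cnt -big_split /=; apply: leq_sum => x _.
    case: (x =P m) => [-> | _].
    + by rewrite (negbTE hmt) hm hpm.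
    + rewrite addn0; case hx: (x \in I t); case hp: (p <= crank t x) => //=.
      by rewrite (persist hn hx) //; apply: leq_trans hp.
  have h1 := cnt_compl' (I t) (crank t) p; have h2 := cnt_compl' (I a) (crank t) p.
  rewrite !(neck_card _ hn) in h1 h2; tolia.
- have hle : cnt (I j) (fun x => crank t x < p) <= cnt (I t) (fun x => crank t x < p).
    by case/gale_cnt: (gale_neck t j hn) => _ /(_ p).
  have h : cnt (I a) (fun x => crank t x < p) + 1 <= cnt (I j) (fun x => crank t x < p).
    rewrite -(sum_eq1 j) /cnt -big_split /=; apply: leq_sum => x _.
    case: (x =P j) => [-> | _].
    + by rewrite (negbTE hja) hjj hjp.
    + rewrite addn0; case hx: (x \in I a); case hp: (crank t x < p) => //=.
      case hxj: (x \in I j) => //.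
      have := hmax hx (negbT hxj).
      move: ham; rewrite (crank_shift a t m) (crank_shift a t j) (crank_shift a t x).
      have := crank_lt t x; have := crank_lt t m; have := crank_lt t j; have := crank_lt t a.
      case: ifP => ?; case: ifP => ?; case: ifP => ?; move=> *; tolia.
  tolia.
Qed.

Lemma part1 t : gale t (I t) K.
Proof.
apply/gale_cnt; split; first by rewrite Kcard (neck_card _ hn).
move=> p.
have e := Kcnt (fun x => crank t x < p); simpl in e.
have G : cnt (I a) (fun x => crank t x < p) <= cnt (I t) (fun x => crank t x < p).
  by case/gale_cnt: (gale_neck t a hn) => _ /(_ p).
case hXj: (crank t j < p); case hXm: (crank t m < p); rewrite ?hXj ?hXm /= in e.
- tolia.
- have hmp : p <= crank t m by rewrite leqNgt hXm.
  have := strict hXj hmp; move=> *; tolia.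
- tolia.
- tolia.
Qed.

Lemma part2 (H : {set 'I_n}) : #|H| = k -> j \in H -> gale a (I a) H -> gale j (I j) H ->
  gale a K H.
Proof.
move=> hH hjH hga hgj.
apply/gale_cnt; split; first by rewrite Kcard hH.
move=> p.
have c1 := cnt_compl' H (crank a) p; have c2 := cnt_compl' K (crank a) p.
rewrite hH Kcard in c1 c2.
suff : cnt K (fun x => p <= crank a x) <= cnt H (fun x => p <= crank a x) by move=> *; tolia.
have e := Kcnt (fun x => p <= crank a x); simpl in e.
have G := gale_F p hga.
case hFj: (p <= crank a j); case hFm: (p <= crank a m); rewrite ?hFj ?hFm /= in e; try tolia.
pose q := n - crank a j + p.
have h1 := gale_F q hgj.
have h2 := gale_F (crank a j).+1 hga.
have hjn := crank_lt a j.
have pw1 : cnt (I a) (fun x => p <= crank a x) <=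
    cnt (I j) (fun x => q <= crank j x) + cnt (I a) (fun x => (crank a j).+1 <= crank a x).
  rewrite /cnt -big_split /=; apply: leq_sum => x _.
  case hx: (x \in I a); case hp: (p <= crank a x) => //=.
  case: (ltngtP (crank a j) (crank a x)) => hc.
  + by rewrite addn1.
  + have hxj : x \in I j.
      case hxj: (x \in I j) => //.
      have := hmax hx (negbT hxj); move: hFm hp hc; move=> *; tolia.
    rewrite hxj /= (crank_shift j a x).
    have := crank_lt a x; case: ifP => ?; move=> *; [tolia | ].
    suff -> : q <= crank a x + n - crank a j by [].
    rewrite /q; tolia.
  + by move: hja; rewrite (crank_inj hc) hx.
have pw2 : cnt H (fun x => q <= crank j x) + cnt H (fun x => (crank a j).+1 <= crank a x) + 1 <=
    cnt H (fun x => p <= crank a x).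
  rewrite -(sum_eq1 j) /cnt -!big_split /=; apply: leq_sum => x _.
  case: (x =P j) => [-> | _].
  + rewrite crank_self hjH ltnn /= hFj.
    suff -> : (q <= 0) = false by [].
    apply/negbTE; rewrite -ltnNge /q; tolia.
  + rewrite addn0 (crank_shift j a x).
    have := crank_lt a x; case hx: (x \in H) => //=.
    rewrite /q; repeat case: ifP => ?; move=> *; bcase; try done; tolia.
tolia.
Qed.

End Main.

Unset Implicit Arguments.
Theorem mainTheorem2 (n k : nat) (I : 'I_n -> {set 'I_n})
  (M : {set {set 'I_n}}) (j : 'I_n) :
  is_necklace k I ->
  M = positroid_of k I ->
  necklace_perm I j != j ->
  forall a : 'I_n,
    let M' := [set H in M | j \in H] in
    let K := if j \in I a then I a
             else (I a :\ cmax a (I a :\: I j)) :|: [set j] in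
    K \in M' /\ (forall H, H \in M' -> gale a K H).
Proof.
move=> hn HM hpj a M' K.
have hjj := jIj hpj.
have inM : forall H, (H \in M) = (#|H| == k) && [forall t, gale t (I t) H].
  by move=> H; rewrite HM /positroid_of in_set.
have inM' : forall H, (H \in M') = (H \in M) && (j \in H).
  by move=> H; rewrite /M' in_set.
rewrite /K; case hja: (j \in I a).
- split.
  + rewrite inM' inM (neck_card _ hn) eqxx hja andbT /=.
    by apply/forallP => t; apply: gale_neck hn.
  + by move=> H; rewrite inM' inM => /andP [/andP [_ /forallP h] _]; apply: h.
- have hja' : j \notin I a by rewrite hja.
  set D := I a :\: I j.
  have : exists x0, x0 \in D.
    case: (set_0Vmem D) => [hD | [x hx]]; last by exists x.
    exfalso; move: hD => /eqP; rewrite setD_eq0 => hsub.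
    have : I a == I j by rewrite eqEcard hsub !(neck_card _ hn) leqnn.
    by move/eqP => e; move: hja; rewrite e hjj.
  case=> x0 hx0.
  have [hmD hmx] := cmax_spec a hx0.
  set m := cmax a D in hmD hmx *.
  have hm : m \in I a by move: hmD; rewrite in_setD => /andP [].
  have hmj : m \notin I j by move: hmD; rewrite in_setD => /andP [].
  have hmax : forall y, y \in I a -> y \notin I j -> crank a y <= crank a m.
    by move=> y hy hyj; apply: hmx; rewrite in_setD hy hyj.
  split.
  + rewrite inM' inM.
    rewrite (Kcard hn hja' hm) eqxx /= in_setU in_set1 eqxx orbT andbT.
    by apply/forallP => t; apply: part1.
  + move=> H; rewrite inM' inM => /andP [/andP [/eqP hH /forallP h] hjH].
    by apply: part2 => //; apply: h.
Qed.
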